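(* Let $C=(C_{i,j})$ be an $m\times n$ evolutionary stable (ES) configuration and let $k\ge 0$ be an integer. Then there are no indices $i,j$ (with all positions below lying in the grid) such that either (Type I) $C_{i-1,j-1}=0$, $C_{i,j}=0$, $C_{i+1,j+1}=0$, $C_{i+1,j+2}=1$, for every $t=0,1,\dots,k$: $C_{i+1,j+3+3t}=1$, $C_{i+1,j+4+3t}=0$, $C_{i+1,j+5+3t}=1$, and $C_{i,j+3k+3}=C_{i,j+3k+4}=C_{i,j+3k+5}=1$; or (Type II) $C_{i,j}=0$, $C_{i+1,j-1}=0$, $C_{i+1,j+1}=0$, $C_{i+1,j+2}=1$, for every $t=0,1,\dots,k$: $C_{i+1,j+3+3t}=1$, $C_{i+1,j+4+3t}=0$, $C_{i+1,j+5+3t}=1$, and $C_{i,j+3k+3}=C_{i,j+3k+4}=C_{i,j+3k+5}=1$. The same holds for the mirror images of these two constellations under the reflection $j\mapsto n+1-j$ of columns.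
   Context: An $m\times n$ configuration is a $0$-$1$ matrix $C=(C_{i,j})$, $1\le i\le m$, $1\le j\le n$; $C_{i,j}=1$ means lot $(i,j)$ is occupied by a house. Row $1$ is the northernmost, row $m$ the southernmost; column $1$ westernmost, column $n$ easternmost. A house at $(i,j)$ is blocked from sunlight if the three lots $(i,j-1)$, $(i,j+1)$, $(i+1,j)$ all lie inside the grid and are all occupied (lots outside the grid never obstruct sunlight). $C$ is permissible if no house is blocked, and maximal if it is permissible and setting any single empty lot to $1$ yields a non-permissible configuration. A maximal configuration is resistant to predators if, for every empty lot, putting a house on it results in that new house being blocked; it is resistant to altruists if, for every empty lot, putting a house on it results in some other (already existing) house being blocked. An ES configuration is a maximal configuration resistant to both predators and altruists. *)

(* Defs.v *)
(* Configurations are functions nat -> nat -> bool,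
   rows/columns indexed 1-based; only positions inside the m x n grid are ever
   consulted. C i j = true means lot (i,j) is occupied. *)
From mathcomp Require Import all_boot.
Set Implicit Arguments. Unset Strict Implicit. Unset Printing Implicit Defensive.

Definition config := nat -> nat -> bool.

Definition inGrid (m n i j : nat) : Prop := 1 <= i <= m /\ 1 <= j <= n.

Definition blocked (m n : nat) (C : config) (i j : nat) : Prop :=
  [/\ C i j, 2 <= j, j + 1 <= n, i + 1 <= m &
      [/\ C i j.-1, C i j.+1 & C i.+1 j]].

Definition permissible (m n : nat) (C : config) : Prop :=
  forall i j, inGrid m n i j -> C i j = true -> ~ blocked m n C i j.

Definition addHouse (C : config) (a b : nat) : config :=
  fun i j => if (i == a) && (j == b) then true else C i j.

Definition maximal (m n : nat) (C : config) : Prop :=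
  permissible m n C /\
  forall a b, inGrid m n a b -> C a b = false -> ~ permissible m n (addHouse C a b).

Definition resistant_predators (m n : nat) (C : config) : Prop :=
  forall a b, inGrid m n a b -> C a b = false -> blocked m n (addHouse C a b) a b.

Definition resistant_altruists (m n : nat) (C : config) : Prop :=
  forall a b, inGrid m n a b -> C a b = false ->
    exists i j, [/\ inGrid m n i j, (i, j) <> (a, b), C i j = true &
                    blocked m n (addHouse C a b) i j].

Definition ES (m n : nat) (C : config) : Prop :=
  [/\ maximal m n C, resistant_predators m n C & resistant_altruists m n C].

Definition mirror (n : nat) (C : config) : config := fun i j => C i (n.+1 - j).

Definition tail_pattern (C : config) (k i j : nat) : Prop :=
  C i.+1 (j + 2) = true /\
  (forall t, t <= k ->
     [/\ C i.+1 (j + 3 + 3 * t) = true, C i.+1 (j + 4 + 3 * t) = false &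
         C i.+1 (j + 5 + 3 * t) = true]) /\
  [/\ C i (j + 3 * k + 3) = true, C i (j + 3 * k + 4) = true &
      C i (j + 3 * k + 5) = true].

Definition typeI (m n : nat) (C : config) (k i j : nat) : Prop :=
  [/\ 2 <= i, i + 1 <= m, 2 <= j, j + 3 * k + 5 <= n &
  [/\ C i.-1 j.-1 = false, C i j = false, C i.+1 j.+1 = false &
      tail_pattern C k i j]].

Definition typeII (m n : nat) (C : config) (k i j : nat) : Prop :=
  [/\ 1 <= i, i + 1 <= m, 2 <= j, j + 3 * k + 5 <= n &
  [/\ C i j = false, C i.+1 j.-1 = false, C i.+1 j.+1 = false &
      tail_pattern C k i j]].

(* Main.v *)
Require Import Defs.
From mathcomp Require Import all_boot.
From mathcomp Require Import zify.
Set Implicit Arguments. Unset Strict Implicit. Unset Printing Implicit Defensive.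

Definition Blk := nat -> nat -> bool.

Definition cell_ok (B : Blk) (w r d : nat) : bool :=
  (if (0 < d) && (d.+1 < w) then
     ~~ [&& B r d, B r d.-1, B r d.+1 & B r.+1 d] &&
     (B r d || [&& B r d.-1, B r d.+1 & B r.+1 d])
   else true) &&
  (if [&& 0 < r, 1 < d & d.+2 < w] then
     [|| B r d, [&& B r d.+1, B r d.+2 & B r.+1 d.+1],
         [&& B r d.-1, B r d.-2 & B r.+1 d.-1] |
         [&& B r.-1 d, B r.-1 d.-1 & B r.-1 d.+1]]
   else true).

Definition local_ok (top : bool) (B : Blk) (w : nat) : bool :=
  all (fun r => (top && (r == 0)) || all (fun d => cell_ok B w r d) (iota 0 w)) (iota 0 3).

Definition rows3 := (seq bool * seq bool * seq bool)%type.

Definition rowsel (s nb : rows3) (p : seq bool) (r : nat) : seq bool :=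
  match r with 0 => s.1.1 ++ nb.1.1 | 1 => s.1.2 ++ nb.1.2 | 2 => s.2 ++ nb.2 | _ => p end.

Definition blk (s nb : rows3) (p : seq bool) : Blk := fun r d => nth false (rowsel s nb p r) d.

Definition nxt (B : Blk) : rows3 :=
  ([seq B 0 (d + 3) | d <- iota 0 5], [seq B 1 (d + 3) | d <- iota 0 5],
   [seq B 2 (d + 3) | d <- iota 0 5]).

Definition startb (B : Blk) := [&& ~~ B 0 2, ~~ B 1 1, ~~ B 1 3 & B 1 4].
Definition perb (B : Blk) := [&& B 1 5, ~~ B 1 6 & B 1 7].
Definition closeb (B : Blk) := [&& B 0 5, B 0 6 & B 0 7].
Definition endb (B : Blk) := [&& B 2 5, B 2 6 & B 2 7].
Definition nextg (g : bool) (B : Blk) := (g || startb B) && perb B.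
Definition closing (g : bool) (B : Blk) := nextg g B && closeb B.
Definition toprow_ok (top : bool) (s nb : rows3) := ~~ top || (all negb s.1.1 && all negb nb.1.1).

Fixpoint bitsn (n : nat) : seq (seq bool) :=
  match n with 0 => [:: [::]] | n'.+1 => [seq (b :: l) | b <- [:: false; true], l <- bitsn n'] end.

Definition NB : seq rows3 := [seq (xy.1, xy.2, z) | xy <- [seq (x, y) | x <- bitsn 3, y <- bitsn 3], z <- bitsn 3].
Definition S15 : seq rows3 := [seq (xy.1, xy.2, z) | xy <- [seq (x, y) | x <- bitsn 5, y <- bitsn 5], z <- bitsn 5].
Definition nil3 : rows3 := ([::], [::], [::]).
Definition PAT := [:: false; true; true; false; true; true; false; true].
Definition p0full (a b : bool) := [:: a; b; true; false; true; true; false; true].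
Definition fixedb (typ : bool) (s : rows3) (a b : bool) :=
  if typ then ~~ nth false s.1.2 1 && ~~ nth false s.2 2 else ~~ nth false s.2 2 && ~~ b.

Definition INV0N1 : seq (rows3 * bool * bool) := [:: (([:: false; true; false; true; false], [:: true; false; true; false; true], [:: true; true; false; true; false]), false, true);
  (([:: false; true; false; true; false], [:: true; false; true; false; true], [:: true; true; false; true; false]), true, true);
  (([:: false; true; false; true; false], [:: true; false; true; false; true], [:: true; true; false; true; true]), false, true);
  (([:: false; true; false; true; false], [:: true; false; true; false; true], [:: true; true; false; true; true]), true, true);
  (([:: false; true; false; true; false], [:: true; false; true; true; false], [:: true; true; false; true; false]), false, true);
  (([:: false; true; false; true; false], [:: true; false; true; true; false], [:: true; true; false; true; false]), true, true);
  (([:: false; true; false; true; false], [:: true; false; true; true; false], [:: true; true; false; true; true]), false, true);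
  (([:: false; true; false; true; false], [:: true; false; true; true; false], [:: true; true; false; true; true]), true, true);
  (([:: false; true; false; true; true], [:: true; false; true; false; true], [:: true; true; false; true; false]), false, true);
  (([:: false; true; false; true; true], [:: true; false; true; false; true], [:: true; true; false; true; false]), true, true);
  (([:: false; true; false; true; true], [:: true; false; true; false; true], [:: true; true; false; true; true]), false, true);
  (([:: false; true; false; true; true], [:: true; false; true; false; true], [:: true; true; false; true; true]), true, true);
  (([:: false; true; false; true; true], [:: true; false; true; true; false], [:: true; true; false; true; false]), false, true);
  (([:: false; true; false; true; true], [:: true; false; true; true; false], [:: true; true; false; true; false]), true, true);
  (([:: false; true; false; true; true], [:: true; false; true; true; false], [:: true; true; false; true; true]), false, true);
  (([:: false; true; false; true; true], [:: true; false; true; true; false], [:: true; true; false; true; true]), true, true);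
  (([:: false; true; true; false; true], [:: true; false; true; true; false], [:: true; true; false; true; false]), false, true);
  (([:: false; true; true; false; true], [:: true; false; true; true; false], [:: true; true; false; true; false]), true, true);
  (([:: false; true; true; false; true], [:: true; false; true; true; false], [:: true; true; false; true; true]), false, true);
  (([:: false; true; true; false; true], [:: true; false; true; true; false], [:: true; true; false; true; true]), true, true);
  (([:: true; true; false; true; false], [:: true; false; true; false; true], [:: true; true; false; true; false]), false, true);
  (([:: true; true; false; true; false], [:: true; false; true; false; true], [:: true; true; false; true; false]), true, true);
  (([:: true; true; false; true; false], [:: true; false; true; false; true], [:: true; true; false; true; true]), false, true);
  (([:: true; true; false; true; false], [:: true; false; true; false; true], [:: true; true; false; true; true]), true, true);
  (([:: true; true; false; true; false], [:: true; false; true; true; false], [:: true; true; false; true; false]), false, true);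
  (([:: true; true; false; true; false], [:: true; false; true; true; false], [:: true; true; false; true; false]), true, true);
  (([:: true; true; false; true; false], [:: true; false; true; true; false], [:: true; true; false; true; true]), false, true);
  (([:: true; true; false; true; false], [:: true; false; true; true; false], [:: true; true; false; true; true]), true, true);
  (([:: true; true; false; true; true], [:: true; false; true; false; true], [:: true; true; false; true; false]), false, true);
  (([:: true; true; false; true; true], [:: true; false; true; false; true], [:: true; true; false; true; false]), true, true);
  (([:: true; true; false; true; true], [:: true; false; true; false; true], [:: true; true; false; true; true]), false, true);
  (([:: true; true; false; true; true], [:: true; false; true; false; true], [:: true; true; false; true; true]), true, true);
  (([:: true; true; false; true; true], [:: true; false; true; true; false], [:: true; true; false; true; false]), false, true);
  (([:: true; true; false; true; true], [:: true; false; true; true; false], [:: true; true; false; true; false]), true, true);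
  (([:: true; true; false; true; true], [:: true; false; true; true; false], [:: true; true; false; true; true]), false, true);
  (([:: true; true; false; true; true], [:: true; false; true; true; false], [:: true; true; false; true; true]), true, true);
  (([:: true; true; true; false; true], [:: true; false; true; true; false], [:: true; true; false; true; false]), false, true);
  (([:: true; true; true; false; true], [:: true; false; true; true; false], [:: true; true; false; true; false]), true, true);
  (([:: true; true; true; false; true], [:: true; false; true; true; false], [:: true; true; false; true; true]), false, true);
  (([:: true; true; true; false; true], [:: true; false; true; true; false], [:: true; true; false; true; true]), true, true)].

Definition INV0N2 : seq (rows3 * bool * bool) := [:: (([:: false; true; false; true; false], [:: false; true; true; true; false], [:: false; true; false; true; false]), false, false);
  (([:: false; true; false; true; false], [:: false; true; true; true; false], [:: false; true; false; true; false]), true, false);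
  (([:: false; true; false; true; false], [:: false; true; true; true; false], [:: false; true; false; true; true]), false, false);
  (([:: false; true; false; true; false], [:: false; true; true; true; false], [:: false; true; false; true; true]), true, false);
  (([:: false; true; false; true; false], [:: false; true; true; true; false], [:: true; true; false; true; false]), false, false);
  (([:: false; true; false; true; false], [:: false; true; true; true; false], [:: true; true; false; true; false]), true, false);
  (([:: false; true; false; true; false], [:: false; true; true; true; false], [:: true; true; false; true; true]), false, false);
  (([:: false; true; false; true; false], [:: false; true; true; true; false], [:: true; true; false; true; true]), true, false);
  (([:: false; true; false; true; true], [:: false; true; true; true; false], [:: false; true; false; true; false]), false, false);
  (([:: false; true; false; true; true], [:: false; true; true; true; false], [:: false; true; false; true; false]), true, false);
  (([:: false; true; false; true; true], [:: false; true; true; true; false], [:: false; true; false; true; true]), false, false);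
  (([:: false; true; false; true; true], [:: false; true; true; true; false], [:: false; true; false; true; true]), true, false);
  (([:: false; true; false; true; true], [:: false; true; true; true; false], [:: true; true; false; true; false]), false, false);
  (([:: false; true; false; true; true], [:: false; true; true; true; false], [:: true; true; false; true; false]), true, false);
  (([:: false; true; false; true; true], [:: false; true; true; true; false], [:: true; true; false; true; true]), false, false);
  (([:: false; true; false; true; true], [:: false; true; true; true; false], [:: true; true; false; true; true]), true, false);
  (([:: false; true; true; false; true], [:: false; true; true; true; false], [:: false; true; false; true; false]), false, false);
  (([:: false; true; true; false; true], [:: false; true; true; true; false], [:: false; true; false; true; false]), true, false);
  (([:: false; true; true; false; true], [:: false; true; true; true; false], [:: false; true; false; true; true]), false, false);
  (([:: false; true; true; false; true], [:: false; true; true; true; false], [:: false; true; false; true; true]), true, false);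
  (([:: false; true; true; false; true], [:: false; true; true; true; false], [:: true; true; false; true; false]), false, false);
  (([:: false; true; true; false; true], [:: false; true; true; true; false], [:: true; true; false; true; false]), true, false);
  (([:: false; true; true; false; true], [:: false; true; true; true; false], [:: true; true; false; true; true]), false, false);
  (([:: false; true; true; false; true], [:: false; true; true; true; false], [:: true; true; false; true; true]), true, false);
  (([:: true; false; true; false; true], [:: false; true; true; true; false], [:: false; true; false; true; false]), false, false);
  (([:: true; false; true; false; true], [:: false; true; true; true; false], [:: false; true; false; true; false]), true, false);
  (([:: true; false; true; false; true], [:: false; true; true; true; false], [:: false; true; false; true; true]), false, false);
  (([:: true; false; true; false; true], [:: false; true; true; true; false], [:: false; true; false; true; true]), true, false);
  (([:: true; false; true; false; true], [:: false; true; true; true; false], [:: true; true; false; true; false]), false, false);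
  (([:: true; false; true; false; true], [:: false; true; true; true; false], [:: true; true; false; true; false]), true, false);
  (([:: true; false; true; false; true], [:: false; true; true; true; false], [:: true; true; false; true; true]), false, false);
  (([:: true; false; true; false; true], [:: false; true; true; true; false], [:: true; true; false; true; true]), true, false);
  (([:: true; false; true; true; false], [:: false; true; true; true; false], [:: false; true; false; true; false]), false, false);
  (([:: true; false; true; true; false], [:: false; true; true; true; false], [:: false; true; false; true; false]), true, false);
  (([:: true; false; true; true; false], [:: false; true; true; true; false], [:: false; true; false; true; true]), false, false);
  (([:: true; false; true; true; false], [:: false; true; true; true; false], [:: false; true; false; true; true]), true, false);
  (([:: true; false; true; true; false], [:: false; true; true; true; false], [:: true; true; false; true; false]), false, false);
  (([:: true; false; true; true; false], [:: false; true; true; true; false], [:: true; true; false; true; false]), true, false);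
  (([:: true; false; true; true; false], [:: false; true; true; true; false], [:: true; true; false; true; true]), false, false);
  (([:: true; false; true; true; false], [:: false; true; true; true; false], [:: true; true; false; true; true]), true, false);
  (([:: true; true; false; true; false], [:: false; true; true; true; false], [:: false; true; false; true; false]), false, false);
  (([:: true; true; false; true; false], [:: false; true; true; true; false], [:: false; true; false; true; false]), true, false);
  (([:: true; true; false; true; false], [:: false; true; true; true; false], [:: false; true; false; true; true]), false, false);
  (([:: true; true; false; true; false], [:: false; true; true; true; false], [:: false; true; false; true; true]), true, false);
  (([:: true; true; false; true; false], [:: false; true; true; true; false], [:: true; true; false; true; false]), false, false);
  (([:: true; true; false; true; false], [:: false; true; true; true; false], [:: true; true; false; true; false]), true, false);
  (([:: true; true; false; true; false], [:: false; true; true; true; false], [:: true; true; false; true; true]), false, false);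
  (([:: true; true; false; true; false], [:: false; true; true; true; false], [:: true; true; false; true; true]), true, false);
  (([:: true; true; false; true; true], [:: false; true; true; true; false], [:: false; true; false; true; false]), false, false);
  (([:: true; true; false; true; true], [:: false; true; true; true; false], [:: false; true; false; true; false]), true, false);
  (([:: true; true; false; true; true], [:: false; true; true; true; false], [:: false; true; false; true; true]), false, false);
  (([:: true; true; false; true; true], [:: false; true; true; true; false], [:: false; true; false; true; true]), true, false);
  (([:: true; true; false; true; true], [:: false; true; true; true; false], [:: true; true; false; true; false]), false, false);
  (([:: true; true; false; true; true], [:: false; true; true; true; false], [:: true; true; false; true; false]), true, false);
  (([:: true; true; false; true; true], [:: false; true; true; true; false], [:: true; true; false; true; true]), false, false);
  (([:: true; true; false; true; true], [:: false; true; true; true; false], [:: true; true; false; true; true]), true, false)].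

Definition INVN : seq (rows3 * bool) := [:: (([:: false; true; false; true; false], [:: true; false; true; false; true], [:: true; true; false; true; false]), false);
  (([:: false; true; false; true; false], [:: true; false; true; false; true], [:: true; true; false; true; true]), false);
  (([:: false; true; false; true; false], [:: true; false; true; true; false], [:: true; true; false; true; false]), false);
  (([:: false; true; false; true; false], [:: true; false; true; true; false], [:: true; true; false; true; true]), false);
  (([:: false; true; false; true; true], [:: true; false; true; false; true], [:: true; true; false; true; false]), false);
  (([:: false; true; false; true; true], [:: true; false; true; false; true], [:: true; true; false; true; true]), false);
  (([:: false; true; false; true; true], [:: true; false; true; true; false], [:: true; true; false; true; false]), false);
  (([:: false; true; false; true; true], [:: true; false; true; true; false], [:: true; true; false; true; true]), false);
  (([:: false; true; true; false; true], [:: true; false; true; true; false], [:: true; true; false; true; false]), false);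
  (([:: false; true; true; false; true], [:: true; false; true; true; false], [:: true; true; false; true; true]), false);
  (([:: true; false; true; false; true], [:: false; true; true; true; false], [:: true; true; false; true; false]), false);
  (([:: true; false; true; false; true], [:: false; true; true; true; false], [:: true; true; false; true; true]), false);
  (([:: true; false; true; true; false], [:: false; true; true; false; true], [:: true; true; false; true; false]), true);
  (([:: true; false; true; true; false], [:: false; true; true; false; true], [:: true; true; false; true; true]), true);
  (([:: true; false; true; true; false], [:: false; true; true; true; false], [:: true; true; false; true; false]), false);
  (([:: true; false; true; true; false], [:: false; true; true; true; false], [:: true; true; false; true; true]), false);
  (([:: true; true; false; true; false], [:: false; true; true; false; true], [:: true; true; false; true; false]), true);
  (([:: true; true; false; true; false], [:: false; true; true; false; true], [:: true; true; false; true; true]), true);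
  (([:: true; true; false; true; false], [:: false; true; true; true; false], [:: true; true; false; true; false]), false);
  (([:: true; true; false; true; false], [:: false; true; true; true; false], [:: true; true; false; true; true]), false);
  (([:: true; true; false; true; false], [:: true; false; true; false; true], [:: true; true; false; true; false]), false);
  (([:: true; true; false; true; false], [:: true; false; true; false; true], [:: true; true; false; true; true]), false);
  (([:: true; true; false; true; false], [:: true; false; true; true; false], [:: true; true; false; true; false]), false);
  (([:: true; true; false; true; false], [:: true; false; true; true; false], [:: true; true; false; true; true]), false);
  (([:: true; true; false; true; true], [:: false; true; true; false; true], [:: true; true; false; true; false]), true);
  (([:: true; true; false; true; true], [:: false; true; true; false; true], [:: true; true; false; true; true]), true);
  (([:: true; true; false; true; true], [:: false; true; true; true; false], [:: true; true; false; true; false]), false);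
  (([:: true; true; false; true; true], [:: false; true; true; true; false], [:: true; true; false; true; true]), false);
  (([:: true; true; false; true; true], [:: true; false; true; false; true], [:: true; true; false; true; false]), false);
  (([:: true; true; false; true; true], [:: true; false; true; false; true], [:: true; true; false; true; true]), false);
  (([:: true; true; false; true; true], [:: true; false; true; true; false], [:: true; true; false; true; false]), false);
  (([:: true; true; false; true; true], [:: true; false; true; true; false], [:: true; true; false; true; true]), false);
  (([:: true; true; true; false; true], [:: true; false; true; true; false], [:: true; true; false; true; false]), false);
  (([:: true; true; true; false; true], [:: true; false; true; true; false], [:: true; true; false; true; true]), false)].

Definition INV0T1 : seq (rows3 * bool * bool) := [:: (([:: false; false; false; false; false], [:: true; false; true; false; true], [:: true; true; false; true; false]), false, true);
  (([:: false; false; false; false; false], [:: true; false; true; false; true], [:: true; true; false; true; false]), true, true);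
  (([:: false; false; false; false; false], [:: true; false; true; false; true], [:: true; true; false; true; true]), false, true);
  (([:: false; false; false; false; false], [:: true; false; true; false; true], [:: true; true; false; true; true]), true, true);
  (([:: false; false; false; false; false], [:: true; false; true; true; false], [:: true; true; false; true; false]), false, true);
  (([:: false; false; false; false; false], [:: true; false; true; true; false], [:: true; true; false; true; false]), true, true);
  (([:: false; false; false; false; false], [:: true; false; true; true; false], [:: true; true; false; true; true]), false, true);
  (([:: false; false; false; false; false], [:: true; false; true; true; false], [:: true; true; false; true; true]), true, true)].

Definition INV0T2 : seq (rows3 * bool * bool) := [:: (([:: false; false; false; false; false], [:: false; true; true; true; false], [:: false; true; false; true; false]), false, false);
  (([:: false; false; false; false; false], [:: false; true; true; true; false], [:: false; true; false; true; false]), true, false);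
  (([:: false; false; false; false; false], [:: false; true; true; true; false], [:: false; true; false; true; true]), false, false);
  (([:: false; false; false; false; false], [:: false; true; true; true; false], [:: false; true; false; true; true]), true, false);
  (([:: false; false; false; false; false], [:: false; true; true; true; false], [:: true; true; false; true; false]), false, false);
  (([:: false; false; false; false; false], [:: false; true; true; true; false], [:: true; true; false; true; false]), true, false);
  (([:: false; false; false; false; false], [:: false; true; true; true; false], [:: true; true; false; true; true]), false, false);
  (([:: false; false; false; false; false], [:: false; true; true; true; false], [:: true; true; false; true; true]), true, false)].

Definition INVT : seq (rows3 * bool) := [:: (([:: false; false; false; false; false], [:: false; true; true; false; true], [:: true; true; false; true; false]), true);
  (([:: false; false; false; false; false], [:: false; true; true; false; true], [:: true; true; false; true; true]), true);
  (([:: false; false; false; false; false], [:: false; true; true; true; false], [:: true; true; false; true; false]), false);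
  (([:: false; false; false; false; false], [:: false; true; true; true; false], [:: true; true; false; true; true]), false);
  (([:: false; false; false; false; false], [:: true; false; true; false; true], [:: true; true; false; true; false]), false);
  (([:: false; false; false; false; false], [:: true; false; true; false; true], [:: true; true; false; true; true]), false);
  (([:: false; false; false; false; false], [:: true; false; true; true; false], [:: true; true; false; true; false]), false);
  (([:: false; false; false; false; false], [:: true; false; true; true; false], [:: true; true; false; true; true]), false)].


Definition INV0 (top typ : bool) := if top then (if typ then INV0T1 else INV0T2) else (if typ then INV0N1 else INV0N2).
Definition INV (top : bool) := if top then INVT else INVN.

Definition check1 (top typ : bool) : bool :=
  all (fun s => all (fun a => all (fun b =>
     if toprow_ok top s nil3 then if fixedb typ s a b then
       if local_ok top (blk s nil3 (p0full a b)) 5 then (s, a, b) \in INV0 top typ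
       else true else true else true) [:: false; true]) [:: false; true]) S15.

Definition check2 (top typ : bool) : bool :=
  all (fun sab => all (fun nb =>
     let B := blk sab.1.1 nb (p0full sab.1.2 sab.2) in
     if toprow_ok top sab.1.1 nb then if local_ok top B 8 then
       (~~ endb B && (closing false B || ((nxt B, nextg false B) \in INV top))) else true else true) NB) (INV0 top typ).

Definition check3 (top : bool) : bool :=
  all (fun sg => all (fun nb =>
     let B := blk sg.1 nb PAT in
     if toprow_ok top sg.1 nb then if local_ok top B 8 then
       (~~ endb B && (closing sg.2 B || ((nxt B, nextg sg.2 B) \in INV top))) else true else true) NB) (INV top).

Lemma check1_ok top typ : check1 top typ. Proof. case: top; case: typ; vm_compute; reflexivity. Qed.
Lemma check2_ok top typ : check2 top typ. Proof. by case: top; case: typ; vm_compute. Qed.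
Lemma check3_ok top : check3 top. Proof. by case: top; vm_compute. Qed.


Lemma perm_lem m n C a b : ES m n C -> 1 <= a -> a + 1 <= m -> 2 <= b -> b + 1 <= n ->
  C a b -> C a b.-1 -> C a b.+1 -> C a.+1 b -> False.
Proof.
move=> [[hp _] _ _] ha ham hb hbn h0 h1 h2 h3.
have hg : inGrid m n a b by rewrite /inGrid; lia.
by apply: (hp a b hg h0); split.
Qed.

Lemma pred_lem m n C a b : ES m n C -> inGrid m n a b -> C a b = false ->
  [/\ 2 <= b, b + 1 <= n, a + 1 <= m & [/\ C a b.-1, C a b.+1 & C a.+1 b]].
Proof.
move=> [_ hpr _] hg h0.
case: (hpr a b hg h0) => _ hb hbn ham [].
rewrite /addHouse !eqxx /=.
have -> : (b.-1 == b) = false by apply/eqP; lia.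
have -> : (b.+1 == b) = false by apply/eqP; lia.
have -> : (a.+1 == a) = false by apply/eqP; lia.
by [].
Qed.

Lemma alt_lem m n C a b : ES m n C -> inGrid m n a b -> C a b = false ->
  [|| [&& C a b.+1, C a b.+2 & C a.+1 b.+1],
      [&& 3 <= b, C a b.-1, C a b.-2 & C a.+1 b.-1] |
      [&& 2 <= a, C a.-1 b, C a.-1 b.-1 & C a.-1 b.+1]].
Proof.
move=> hES hg h0; have [[hp _] _ halt] := hES.
case: (halt a b hg h0) => i' [j' [hg' hne hc [_ hj2 hjn him [hl hr hd]]]].
move: hl hr hd; rewrite /addHouse.
case: (boolP ((i' == a) && (j'.-1 == b))) => [/andP [/eqP ei /eqP ej] | nl].
  move=> _; subst i'.
  have ej' : j' = b.+1 by lia.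
  subst j'.
  have -> : (b.+2 == b) = false by apply/eqP; lia.
  have -> : (a.+1 == a) = false by apply/eqP; lia.
  rewrite andbF /= => hr hd.
  by rewrite hc hr hd.
case: (boolP ((i' == a) && (j'.+1 == b))) => [/andP [/eqP ei /eqP ej] | nr].
  move=> hl _; subst i'.
  have ej' : j' = b.-2.+1 by lia.
  have -> : (a.+1 == a) = false by apply/eqP; lia.
  rewrite /= => hd.
  apply/orP; right; apply/orP; left.
  have e1 : b.-1 = j' by lia.
  rewrite e1 hc hl hd.
  apply/andP; split; first lia.
  done.
case: (boolP ((i'.+1 == a) && (j' == b))) => [/andP [/eqP ei /eqP ej] | nd].
  move=> hl hr _; subst j'.
  apply/orP; right; apply/orP; right.
  have e1 : a.-1 = i' by lia.
  rewrite e1 hc hl hr.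
  move: hg'; rewrite /inGrid => hg'.
  apply/andP; split; first lia.
  done.
move=> hl hr hd; exfalso.
move: hg'; rewrite /inGrid => hg'.
apply: (perm_lem hES _ him hj2 hjn hc hl hr hd); lia.
Qed.


Definition Gf (C : config) (i j r x : nat) : bool :=
  if (i == 2) && (r == 0) then false else C (i - 2 + r) (j - 2 + x).

Lemma GfE C i j r x a b : ~~ ((i == 2) && (r == 0)) -> a = i - 2 + r -> b = j - 2 + x ->
  Gf C i j r x = C a b.
Proof. by rewrite /Gf => /negbTE -> -> ->. Qed.


Lemma ar_p1 (y d : nat) : y + d.+1 = (y + d).+1. Proof. by rewrite addnS. Qed.
Lemma ar_p2 (y d : nat) : y + d.+2 = (y + d).+2. Proof. by rewrite !addnS. Qed.
Lemma ar_m1 (y d : nat) : 0 < d -> y + d.-1 = (y + d).-1. Proof. by case: d => // d _; rewrite addnS. Qed.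
Lemma ar2_m1 (y x d : nat) : 0 < d -> y + (x + d.-1) = (y + (x + d)).-1.
Proof. by case: d => // d _; rewrite !addnS. Qed.
Lemma ar2_m2 (y x d : nat) : 1 < d -> y + (x + d.-2) = (y + (x + d)).-2.
Proof. by case: d => [|[|d]] // _; rewrite !addnS. Qed.

Ltac arw := rewrite ?ar_p1 ?ar_p2;
  repeat (rewrite ar2_m2; last by assumption);
  repeat (rewrite ar2_m1; last by assumption);
  repeat (rewrite ar_m1; last by assumption).

Lemma local_ok_G m n C i j x0 w : ES m n C -> 2 <= i -> i + 1 <= m -> 2 <= j ->
  1 <= j - 2 + x0 -> j - 2 + x0 + w <= n.+1 ->
  local_ok (i == 2) (fun r d => Gf C i j r (x0 + d)) w.
Proof.
move=> hES hi him hj hx0 hxw.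
apply/allP => r; rewrite mem_iota add0n => /andP [_ hr].
case: (boolP ((i == 2) && (r == 0))) => //= htop.
apply/allP => d; rewrite mem_iota add0n => /andP [_ hd].
have [a ea] : exists a, a = i - 2 + r by eexists.
have [b eb] : exists b, b = j - 2 + (x0 + d) by eexists.
have ha1 : 1 <= a by move: htop; case: eqP; case: eqP => /=; lia.
have ham : a + 1 <= m by lia.
have E0 : Gf C i j r (x0 + d) = C a b by apply: GfE.
have E1 : Gf C i j r.+1 (x0 + d) = C a.+1 b by apply: GfE => //=; rewrite ?ea ?eb; arw; rewrite ?andbF.
rewrite /cell_ok E0 E1.
apply/andP; split.
  case: ifP => // /andP [hd0 hdw].
  have El : Gf C i j r (x0 + d.-1) = C a b.-1 by apply: GfE => //=; rewrite ?ea ?eb; arw; rewrite ?andbF.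
  have Er : Gf C i j r (x0 + d.+1) = C a b.+1 by apply: GfE => //=; rewrite ?ea ?eb; arw; rewrite ?andbF.
  rewrite El Er.
  apply/andP; split.
    apply/negP => /and4P [h0 h1 h2 h3].
    apply: (perm_lem hES ha1 ham _ _ h0 h1 h2 h3); lia.
  case hc: (C a b) => //=.
  have hg : inGrid m n a b by rewrite /inGrid; lia.
  by case: (pred_lem hES hg hc) => _ _ _ [-> -> ->].
case: ifP => // /and3P [hr0 hd1 hdw].
have hd0 : 0 < d by apply: ltnW.
case hc: (C a b) => //=.
have hg : inGrid m n a b by rewrite /inGrid; lia.
have Er : Gf C i j r (x0 + d.+1) = C a b.+1 by apply: GfE => //=; rewrite ?ea ?eb; arw; rewrite ?andbF.
have Err : Gf C i j r (x0 + d.+2) = C a b.+2 by apply: GfE => //=; rewrite ?ea ?eb; arw; rewrite ?andbF.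
have Edr : Gf C i j r.+1 (x0 + d.+1) = C a.+1 b.+1 by apply: GfE => //=; rewrite ?ea ?eb; arw; rewrite ?andbF.
have El : Gf C i j r (x0 + d.-1) = C a b.-1 by apply: GfE => //=; rewrite ?ea ?eb; arw; rewrite ?andbF.
have Ell : Gf C i j r (x0 + d.-2) = C a b.-2 by apply: GfE => //=; rewrite ?ea ?eb; arw; rewrite ?andbF.
have Edl : Gf C i j r.+1 (x0 + d.-1) = C a.+1 b.-1 by apply: GfE => //=; rewrite ?ea ?eb; arw; rewrite ?andbF.
rewrite Er Err Edr El Ell Edl.
case/or3P: (alt_lem hES hg hc) => [-> // | /and4P [_ -> -> ->] | /and4P [ha2 h1 h2 h3]].
  by rewrite orbT.
have ntop : ~~ ((i == 2) && (r.-1 == 0)).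
  apply/negP => /andP [/eqP ei /eqP er]; move: ha2; rewrite ea ei.
  have -> : r = 1 by case: (r) er hr0 => [|[|r']].
  by [].
have Eu : Gf C i j r.-1 (x0 + d) = C a.-1 b by apply: GfE => //=; rewrite ?ea ?eb; arw; rewrite ?andbF.
have Eul : Gf C i j r.-1 (x0 + d.-1) = C a.-1 b.-1 by apply: GfE => //=; rewrite ?ea ?eb; arw; rewrite ?andbF.
have Eur : Gf C i j r.-1 (x0 + d.+1) = C a.-1 b.+1 by apply: GfE => //=; rewrite ?ea ?eb; arw; rewrite ?andbF.
by rewrite Eu Eul Eur h1 h2 h3 !orbT.
Qed.


Lemma cell_ok_ext (B B' : Blk) w r d : r < 3 -> d < w ->
  (forall r' d', r' < 4 -> d' < w -> B r' d' = B' r' d') ->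
  cell_ok B w r d = cell_ok B' w r d.
Proof.
move=> hr hd E; rewrite /cell_ok.
case: ifP => [/andP [h1 h2] | _]; case: ifP => [/and3P [h3 h4 h5] | _];
  rewrite ?(E r d) ?(E r d.-1) ?(E r d.+1) ?(E r.+1 d) ?(E r d.+2) ?(E r.+1 d.+1)
          ?(E r d.-2) ?(E r.+1 d.-1) ?(E r.-1 d) ?(E r.-1 d.-1) ?(E r.-1 d.+1) //; lia.
Qed.

Lemma local_ok_ext top (B B' : Blk) w :
  (forall r d, r < 4 -> d < w -> B r d = B' r d) -> local_ok top B w = local_ok top B' w.
Proof.
move=> E; apply: eq_in_all => r; rewrite mem_iota add0n => /andP [_ hr].
congr orb; apply: eq_in_all => d; rewrite mem_iota add0n => /andP [_ hd].
exact: cell_ok_ext.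
Qed.


Lemma mem_b2 (b : bool) : b \in [:: false; true].
Proof. by case: b. Qed.

Lemma bitsn_mem (l : seq bool) : l \in bitsn (size l).
Proof.
elim: l => [|b l IH] //.
exact: (@allpairs_f _ _ _ (fun b l => b :: l) [:: false; true] (bitsn (size l)) b l (mem_b2 b) IH).
Qed.

Lemma mem_NB (x y z : seq bool) : size x = 3 -> size y = 3 -> size z = 3 -> (x, y, z) \in NB.
Proof.
move=> hx hy hz; rewrite /NB.
have h1 : (x, y) \in [seq (x, y) | x <- bitsn 3, y <- bitsn 3].
  apply: (@allpairs_f _ _ _ (fun x y => (x, y)) (bitsn 3) (bitsn 3) x y).
  by rewrite -hx bitsn_mem. by rewrite -hy bitsn_mem.
have h2 : z \in bitsn 3 by rewrite -hz bitsn_mem.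
exact: (@allpairs_f _ _ _ (fun xy z => (xy.1, xy.2, z)) _ (bitsn 3) (x, y) z h1 h2).
Qed.

Lemma mem_S15 (x y z : seq bool) : size x = 5 -> size y = 5 -> size z = 5 -> (x, y, z) \in S15.
Proof.
move=> hx hy hz; rewrite /S15.
have h1 : (x, y) \in [seq (x, y) | x <- bitsn 5, y <- bitsn 5].
  apply: (@allpairs_f _ _ _ (fun x y => (x, y)) (bitsn 5) (bitsn 5) x y).
  by rewrite -hx bitsn_mem. by rewrite -hy bitsn_mem.
have h2 : z \in bitsn 5 by rewrite -hz bitsn_mem.
exact: (@allpairs_f _ _ _ (fun xy z => (xy.1, xy.2, z)) _ (bitsn 5) (x, y) z h1 h2).
Qed.

Definition Bt (C : config) (i j t : nat) : Blk := fun r d => Gf C i j r (3 * t + d).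

Fixpoint gflag (C : config) (i j t : nat) : bool :=
  match t with 0 => false | t'.+1 => nextg (gflag C i j t') (Bt C i j t') end.

Definition rowl (C : config) (i j t r : nat) := [seq Gf C i j r (3 * t + d) | d <- iota 0 5].
Definition rown (C : config) (i j t r : nat) := [seq Gf C i j r (3 * t + (5 + d)) | d <- iota 0 3].
Definition st (C : config) (i j t : nat) : rows3 := (rowl C i j t 0, rowl C i j t 1, rowl C i j t 2).
Definition nbt (C : config) (i j t : nat) : rows3 := (rown C i j t 0, rown C i j t 1, rown C i j t 2).

Lemma nth_split (f : nat -> bool) d : d < 8 ->
  nth false ([seq f d | d <- iota 0 5] ++ [seq f (5 + d) | d <- iota 0 3]) d = f d.
Proof. by do 8 (case: d => [|d] //). Qed.

Lemma nth_split0 (f : nat -> bool) d : d < 5 ->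
  nth false ([seq f d | d <- iota 0 5] ++ [::]) d = f d.
Proof. by do 5 (case: d => [|d] //). Qed.

Lemma blk_st C i j t p r d : r < 3 -> d < 8 ->
  blk (st C i j t) (nbt C i j t) p r d = Bt C i j t r d.
Proof.
move=> hr hd; rewrite /blk /rowsel /st /nbt /rowl /rown /=.
case: r hr => [|[|[|r]]] // _.
- exact: (nth_split (fun x => Gf C i j 0 (3 * t + x))).
- exact: (nth_split (fun x => Gf C i j 1 (3 * t + x))).
- exact: (nth_split (fun x => Gf C i j 2 (3 * t + x))).
Qed.

Lemma blk_st0 C i j t p r d : r < 3 -> d < 5 ->
  blk (st C i j t) nil3 p r d = Bt C i j t r d.
Proof.
move=> hr hd; rewrite /blk /rowsel /st /nbt /rowl /=.
case: r hr => [|[|[|r]]] // _.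
- exact: (nth_split0 (fun x => Gf C i j 0 (3 * t + x))).
- exact: (nth_split0 (fun x => Gf C i j 1 (3 * t + x))).
- exact: (nth_split0 (fun x => Gf C i j 2 (3 * t + x))).
Qed.

Lemma blk_facts (B B' : Blk) g : (forall r d, r < 4 -> d < 8 -> B r d = B' r d) ->
  [/\ endb B = endb B', closing g B = closing g B', nextg g B = nextg g B' & nxt B = nxt B'].
Proof.
move=> E.
have e : forall r d, r < 4 -> d < 8 -> B r d = B' r d by [].
split.
- by rewrite /endb !E.
- by rewrite /closing /nextg /startb /perb /closeb !E.
- by rewrite /nextg /startb /perb !E.
rewrite /nxt; congr (_, _, _); apply/eq_in_map => d; rewrite mem_iota add0n => /andP [_ hd];
  apply: E => //; lia.
Qed.

Lemma nxt_Bt C i j t : nxt (Bt C i j t) = st C i j t.+1.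
Proof.
rewrite /nxt /st /rowl /Bt; congr (_, _, _); apply: eq_map => d;
  congr (Gf _ _ _ _ _); rewrite mulnS; lia.
Qed.

Lemma toprow_st C i j t : toprow_ok (i == 2) (st C i j t) (nbt C i j t) /\ toprow_ok (i == 2) (st C i j t) nil3.
Proof.
rewrite /toprow_ok; case: eqP => [ei | _] //=.
by rewrite /rowl /rown /Gf ei eqxx.
Qed.

Lemma gflag_sound C i j t : gflag C i j t ->
  exists s, [/\ s < t, startb (Bt C i j s) & forall u, s <= u < t -> perb (Bt C i j u)].
Proof.
elim: t => [|t IH] //=; rewrite /nextg => /andP [/orP [hg | hs] hp].
  case: (IH hg) => s [hst hs hu]; exists s; split => //; first lia.
  move=> u hu'; case: (ltnP u t) => hut; first by apply: hu; lia.
  by have -> : u = t by lia.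
exists t; split => //.
by move=> u hu'; have -> : u = t by lia.
Qed.


Lemma use_check1 top typ s a b : toprow_ok top s nil3 -> fixedb typ s a b ->
  local_ok top (blk s nil3 (p0full a b)) 5 -> size s.1.1 = 5 -> size s.1.2 = 5 -> size s.2 = 5 ->
  (s, a, b) \in INV0 top typ.
Proof.
case: s => [[x y] z] /= h1 h2 h3 sx sy sz.
have := allP (check1_ok top typ) _ (@mem_S15 x y z sx sy sz).
move=> /allP /(_ a (mem_b2 a)) /allP /(_ b (mem_b2 b)).
by rewrite h1 h2 h3.
Qed.

Lemma use_check2 top typ s a b nb : (s, a, b) \in INV0 top typ -> nb \in NB ->
  toprow_ok top s nb -> local_ok top (blk s nb (p0full a b)) 8 ->
  ~~ endb (blk s nb (p0full a b)) &&
  (closing false (blk s nb (p0full a b)) ||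
   ((nxt (blk s nb (p0full a b)), nextg false (blk s nb (p0full a b))) \in INV top)).
Proof.
move=> h1 h2 h3 h4.
have := allP (check2_ok top typ) _ h1.
move=> /allP /(_ nb h2).
by rewrite /= h3 h4.
Qed.

Lemma use_check3 top s g nb : (s, g) \in INV top -> nb \in NB ->
  toprow_ok top s nb -> local_ok top (blk s nb PAT) 8 ->
  ~~ endb (blk s nb PAT) &&
  (closing g (blk s nb PAT) || ((nxt (blk s nb PAT), nextg g (blk s nb PAT)) \in INV top)).
Proof.
move=> h1 h2 h3 h4.
have := allP (check3_ok top) _ h1.
move=> /allP /(_ nb h2).
by rewrite /= h3 h4.
Qed.

Lemma sizes_st C i j t : [/\ size (st C i j t).1.1 = 5, size (st C i j t).1.2 = 5 & size (st C i j t).2 = 5].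
Proof. by split; rewrite /st /rowl /= ?size_map ?size_iota. Qed.

Lemma nbt_NB C i j t : nbt C i j t \in NB.
Proof. by rewrite /nbt; apply: mem_NB; rewrite /rown ?size_map ?size_iota. Qed.

Lemma Ceq (C : config) a b a' b' : a = a' -> b = b' -> C a b = C a' b'.
Proof. by move=> -> ->. Qed.


Lemma mk_typeII m n (C : config) i j k s t : 3 <= i -> i + 1 <= m -> 3 <= j -> j + 3 * k + 5 <= n ->
  s <= t -> t <= k ->
  C (i - 2) (j - 2 + (3 * s + 2)) = false -> C i.-1 (j - 2 + (3 * s + 1)) = false ->
  C i.-1 (j - 2 + (3 * s + 3)) = false -> C i.-1 (j - 2 + (3 * s + 4)) ->
  (forall u, s <= u <= t ->
     [/\ C i.-1 (j - 2 + (3 * u + 5)), ~~ C i.-1 (j - 2 + (3 * u + 6)) & C i.-1 (j - 2 + (3 * u + 7))]) ->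
  C (i - 2) (j - 2 + (3 * t + 5)) -> C (i - 2) (j - 2 + (3 * t + 6)) -> C (i - 2) (j - 2 + (3 * t + 7)) ->
  typeII m n C (t - s) (i - 2) (j + 3 * s).
Proof.
move=> hi3 him hj3 hjn hst htk.
have ei : (i - 2).+1 = i.-1 by lia.
rewrite /typeII /tail_pattern ei.
have e0 : j - 2 + (3 * s + 2) = j + 3 * s by lia.
have e1 : j - 2 + (3 * s + 1) = (j + 3 * s).-1 by lia.
have e2 : j - 2 + (3 * s + 3) = (j + 3 * s).+1 by lia.
have e3 : j - 2 + (3 * s + 4) = j + 3 * s + 2 by lia.
have e5 : j - 2 + (3 * t + 5) = j + 3 * s + 3 * (t - s) + 3 by lia.
have e6 : j - 2 + (3 * t + 6) = j + 3 * s + 3 * (t - s) + 4 by lia.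
have e7 : j - 2 + (3 * t + 7) = j + 3 * s + 3 * (t - s) + 5 by lia.
have g1 : 1 <= i - 2 by lia.
have g2 : i - 2 + 1 <= m by lia.
have g3 : 2 <= j + 3 * s by lia.
have g4 : j + 3 * s + 3 * (t - s) + 5 <= n by lia.
have f5 : forall t', j - 2 + (3 * (s + t') + 5) = j + 3 * s + 3 + 3 * t' by move=> t'; lia.
have f6 : forall t', j - 2 + (3 * (s + t') + 6) = j + 3 * s + 4 + 3 * t' by move=> t'; lia.
have f7 : forall t', j - 2 + (3 * (s + t') + 7) = j + 3 * s + 5 + 3 * t' by move=> t'; lia.
move=> h0 h1 h2 h3 hper c5 c6 c7.
rewrite e0 in h0; rewrite e1 in h1; rewrite e2 in h2; rewrite e3 in h3.
rewrite e5 in c5; rewrite e6 in c6; rewrite e7 in c7.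
split => //.
split => //; split => //.
split => // t' ht'.
have hu : s <= s + t' <= t by clear -ht' hst; lia.
have [p5 p6 p7] := hper (s + t') hu.
rewrite f5 in p5; rewrite f6 in p6; rewrite f7 in p7.
by split => //; apply/negbTE.
Qed.


Lemma hloc_lem m n C i j k t w : ES m n C -> 2 <= i -> i + 1 <= m -> 3 <= j -> j + 3 * k + 5 <= n ->
  3 * t + w <= 3 * k + 8 -> local_ok (i == 2) (Bt C i j t) w.
Proof. move=> hES hi him hj hjn hw; apply: (@local_ok_G m n C i j (3 * t) w) => //; lia. Qed.

Lemma Grow_lem (C : config) i j r x : 2 <= i -> 0 < r ->
  Gf C i j r x = C (i - 2 + r) (j - 2 + x).
Proof. by move=> hi hr; rewrite /Gf; case: r hr => // r _; rewrite andbF. Qed.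

Lemma row3_lem (C : config) i j k t d : 2 <= i -> 3 <= j -> 1 <= t <= k -> d < 8 ->
  C i.+1 j.+1 = false -> C i.+1 (j + 2) = true ->
  (forall t, t <= k -> [/\ C i.+1 (j + 3 + 3 * t) = true, C i.+1 (j + 4 + 3 * t) = false
                         & C i.+1 (j + 5 + 3 * t) = true]) ->
  Bt C i j t 3 d = nth false PAT d.
Proof.
move=> hi hj ht hd.
have ei : i - 2 + 3 = i.+1 by lia.
have a0 : 1 < t -> j - 2 + (3 * t + 0) = j + 4 + 3 * (t - 2) by lia.
have a0' : t <= 1 -> j - 2 + (3 * t + 0) = j.+1 by lia.
have a1 : 1 < t -> j - 2 + (3 * t + 1) = j + 5 + 3 * (t - 2) by lia.
have a1' : t <= 1 -> j - 2 + (3 * t + 1) = j + 2 by lia.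
have a2 : j - 2 + (3 * t + 2) = j + 3 + 3 * (t - 1) by lia.
have a3 : j - 2 + (3 * t + 3) = j + 4 + 3 * (t - 1) by lia.
have a4 : j - 2 + (3 * t + 4) = j + 5 + 3 * (t - 1) by lia.
have a5 : j - 2 + (3 * t + 5) = j + 3 + 3 * t by lia.
have a6 : j - 2 + (3 * t + 6) = j + 4 + 3 * t by lia.
have a7 : j - 2 + (3 * t + 7) = j + 5 + 3 * t by lia.
have k2 : t - 2 <= k by lia.
have k1 : t - 1 <= k by lia.
have k0 : t <= k by lia.
move=> hi1j1 ht1 ht2.
rewrite /Bt Grow_lem // ei.
case: d hd => [|[|[|[|[|[|[|[|d]]]]]]]] // _ /=.
- case: (ltnP 1 t) => htt; last by rewrite a0'.
  by rewrite a0 //; case: (ht2 _ k2).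
- case: (ltnP 1 t) => htt; last by rewrite a1'.
  by rewrite a1 //; case: (ht2 _ k2).
- by rewrite a2; case: (ht2 _ k1).
- by rewrite a3; case: (ht2 _ k1).
- by rewrite a4; case: (ht2 _ k1).
- by rewrite a5; case: (ht2 _ k0).
- by rewrite a6; case: (ht2 _ k0).
- by rewrite a7; case: (ht2 _ k0).
Qed.

Lemma induct_lem (P : nat -> Prop) k : P 1 -> (forall t, 1 <= t -> t < k -> P t -> P t.+1) ->
  forall t, 1 <= t <= k -> P t.
Proof.
move=> h1 hs; elim => [|t IH] //; case: t IH => [|t] IH /andP [_ hk]; first done.
apply: hs; [done | lia | apply: IH; lia].
Qed.


Lemma sweep_main m n C i j k (typ : bool) :
  ES m n C -> 2 <= i -> i + 1 <= m -> 3 <= j -> j + 3 * k + 5 <= n ->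
  (3 <= i -> forall k' j', ~ typeII m n C k' (i - 2) j') ->
  (if typ then C i.-1 j.-1 = false else C i.+1 j.-1 = false) ->
  C i j = false -> C i.+1 j = true -> C i.+1 j.+1 = false ->
  tail_pattern C k i j -> False.
Proof.
move=> hES hi2 him hj3 hjn IH.
have ei1 : i - 2 + 1 = i.-1 by lia.
have ei2 : i - 2 + 2 = i by lia.
have ei3 : i - 2 + 3 = i.+1 by lia.
have b01 : j - 2 + (3 * 0 + 1) = j.-1 by lia.
have b02 : j - 2 + (3 * 0 + 2) = j by lia.
have b03 : j - 2 + (3 * 0 + 3) = j.+1 by lia.
have b04 : j - 2 + (3 * 0 + 4) = j + 2 by lia.
have b05 : j - 2 + (3 * 0 + 5) = j + 3 + 3 * 0 by lia.
have b06 : j - 2 + (3 * 0 + 6) = j + 4 + 3 * 0 by lia.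
have b07 : j - 2 + (3 * 0 + 7) = j + 5 + 3 * 0 by lia.
have ek5 : j - 2 + (3 * k + 5) = j + 3 * k + 3 by lia.
have ek6 : j - 2 + (3 * k + 6) = j + 3 * k + 4 by lia.
have ek7 : j - 2 + (3 * k + 7) = j + 3 * k + 5 by lia.
have hloc := @hloc_lem m n C i j k _ _ hES hi2 him hj3 hjn.
have hi3 : i != 2 -> 3 <= i by case: eqP => //; lia.
move=> hty hij hi1j hi1j1 [ht1 [ht2 [he1 he2 he3]]].
have hrow3 : forall t d, 1 <= t <= k -> d < 8 -> Bt C i j t 3 d = nth false PAT d.
  by move=> t d ht hd; exact: (@row3_lem C i j k t d hi2 hj3 ht hd hi1j1 ht1 ht2).
have G0 : forall t, t <= k -> 3 * t + 8 <= 3 * k + 8 by move=> t; lia.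
have hclose : forall t, t <= k -> closing (gflag C i j t) (Bt C i j t) -> False.
  move=> t htk /andP [hn hc].
  case: (boolP (i == 2)) => [/eqP ei | ni].
    by move: hc; rewrite /closeb /Bt /Gf ei eqxx.
  have Grow0 : forall x, Gf C i j 0 x = C (i - 2) (j - 2 + x).
    by move=> x; rewrite /Gf (negbTE ni) /= addn0.
  have [s [hst hs hper]] : exists s, [/\ s <= t, startb (Bt C i j s) &
                              forall u, s <= u <= t -> perb (Bt C i j u)].
    move: hn; rewrite /nextg => /andP [/orP [hg | hs] hp].
      case: (@gflag_sound C i j t hg) => s [h1 h2 h3]; exists s; split => //; first exact: ltnW.
      move=> u /andP [hu1 hu2]; case: (ltnP u t) => hut; first by apply: h3; rewrite hu1.
      by have -> : u = t by apply/eqP; rewrite eqn_leq hu2.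
    exists t; split => // u /andP [hu1 hu2].
    by have -> : u = t by apply/eqP; rewrite eqn_leq hu2.
  apply: (IH (hi3 ni) (t - s) (j + 3 * s)).
  move: hs hc; rewrite /startb /closeb /Bt !Grow0 !Grow_lem // !ei1.
  move=> /and4P [h0 h1 h2 h3] /and3P [c5 c6 c7].
  apply: (@mk_typeII m n C i j k s t (hi3 ni) him hj3 hjn hst htk) => //; try exact: negbTE.
  move=> u hu; have := hper u hu.
  by rewrite /perb /Bt !Grow_lem // !ei1 => /and3P [].
have hB0 : forall r d, r < 4 -> d < 8 ->
    blk (st C i j 0) (nbt C i j 0) (p0full (Gf C i j 3 0) (Gf C i j 3 1)) r d = Bt C i j 0 r d.
  move=> r d hr hd; case: (ltnP r 3) => hr3; first exact: blk_st.
  have -> : r = 3 by apply/eqP; rewrite eqn_leq hr3 andbT -ltnS.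
  rewrite /blk /rowsel /Bt.
  case: d hd => [|[|[|[|[|[|[|[|d]]]]]]]] // _ /=; rewrite ?Grow_lem // ei3.
  - by rewrite b02.
  - by rewrite b03.
  - by rewrite b04.
  - by rewrite b05; case: (ht2 0 (leq0n _)).
  - by rewrite b06; case: (ht2 0 (leq0n _)).
  - by rewrite b07; case: (ht2 0 (leq0n _)).
have hB0' : forall r d, r < 4 -> d < 5 ->
    blk (st C i j 0) nil3 (p0full (Gf C i j 3 0) (Gf C i j 3 1)) r d = Bt C i j 0 r d.
  move=> r d hr hd; case: (ltnP r 3) => hr3; first exact: blk_st0.
  have -> : r = 3 by apply/eqP; rewrite eqn_leq hr3 andbT -ltnS.
  rewrite /blk /rowsel /Bt.
  case: d hd => [|[|[|[|[|d]]]]] // _ /=; rewrite ?Grow_lem // ei3.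
  - by rewrite b02.
  - by rewrite b03.
  - by rewrite b04.
have [sz1 sz2 sz3] := sizes_st C i j 0.
have hfix : fixedb typ (st C i j 0) (Gf C i j 3 0) (Gf C i j 3 1).
  rewrite /fixedb /st /rowl /= !Grow_lem // ei1 ei2 ei3 b01 b02.
  by case: typ hty => /= ->; rewrite hij.
have hin0 : (st C i j 0, Gf C i j 3 0, Gf C i j 3 1) \in INV0 (i == 2) typ.
  apply: use_check1 => //; first by case: (toprow_st C i j 0).
  rewrite (local_ok_ext _ hB0'); apply: hloc; lia.
have h0 := @use_check2 (i == 2) typ (st C i j 0) (Gf C i j 3 0) (Gf C i j 3 1) (nbt C i j 0) hin0 (nbt_NB C i j 0) (proj1 (toprow_st C i j 0))
             (etrans (local_ok_ext _ hB0) (hloc 0 8 (G0 0 (leq0n _)))).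
have [eE eC eN eX] := @blk_facts _ _ false hB0.
rewrite eE eC eN eX nxt_Bt in h0.
case/andP: h0 => hend0 /orP [hcl | hin1]; first exact: (hclose 0 (leq0n _) hcl).
have hendk : endb (Bt C i j k).
  by rewrite /endb /Bt !Grow_lem // ei2 ek5 ek6 ek7 he1 he2 he3.
case: (posnP k) => hk.
  by move: hendk hend0; rewrite hk => ->.
have hsw : forall t, 1 <= t <= k -> (st C i j t, gflag C i j t) \in INV (i == 2).
  apply: induct_lem => // t htt1 htk hin.
  have htk' : 1 <= t <= k by rewrite htt1 ltnW.
  have hBt : forall r d, r < 4 -> d < 8 -> blk (st C i j t) (nbt C i j t) PAT r d = Bt C i j t r d.
    move=> r d hr hd; case: (ltnP r 3) => hr3; first exact: blk_st.
    have -> : r = 3 by apply/eqP; rewrite eqn_leq hr3 andbT -ltnS.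
    by rewrite (hrow3 t d htk' hd).
  have h := @use_check3 (i == 2) (st C i j t) (gflag C i j t) (nbt C i j t) hin (nbt_NB C i j t) (proj1 (toprow_st C i j t))
             (etrans (local_ok_ext _ hBt) (hloc t 8 (G0 t (ltnW htk)))).
  have [eE' eC' eN' eX'] := @blk_facts _ _ (gflag C i j t) hBt.
  rewrite eE' eC' eN' eX' nxt_Bt in h.
  case/andP: h => _ /orP [hcl | //]; exfalso; exact: (hclose t (ltnW htk) hcl).
have hk' : 1 <= k <= k by rewrite hk leqnn.
have hBk : forall r d, r < 4 -> d < 8 -> blk (st C i j k) (nbt C i j k) PAT r d = Bt C i j k r d.
  move=> r d hr hd; case: (ltnP r 3) => hr3; first exact: blk_st.
  have -> : r = 3 by apply/eqP; rewrite eqn_leq hr3 andbT -ltnS.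
  by rewrite (hrow3 k d hk' hd).
have h := @use_check3 (i == 2) (st C i j k) (gflag C i j k) (nbt C i j k) (hsw k hk') (nbt_NB C i j k) (proj1 (toprow_st C i j k))
           (etrans (local_ok_ext _ hBk) (hloc k 8 (G0 k (leqnn _)))).
have [eE' _ _ _] := @blk_facts _ _ (gflag C i j k) hBk.
by rewrite eE' hendk in h.
Qed.


Lemma no_patterns m n C : ES m n C -> forall i k j, ~ typeI m n C k i j /\ ~ typeII m n C k i j.
Proof.
move=> hES i; elim/ltn_ind: i => i IHi k j.
have IH : 3 <= i -> forall k' j', ~ typeII m n C k' (i - 2) j'.
  move=> hi k' j'; apply: (proj2 (IHi (i - 2) _ k' j')); lia.
split.
- move=> [hi2 him hj2 hjn [h1 h2 h3 ht]].
  have hg : inGrid m n i j by rewrite /inGrid; lia.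
  have hj3 : 3 <= j.
    case/or3P: (alt_lem hES hg h2) => [/and3P [_ _] | /andP [] // | /and4P [_ _]].
      by rewrite h3.
    by rewrite h1.
  have hg1 : inGrid m n i.+1 j.+1 by rewrite /inGrid; lia.
  have [_ _ _ [hi1j _ _]] := pred_lem hES hg1 h3.
  exact: (@sweep_main m n C i j k true hES hi2 him hj3 hjn IH h1 h2 hi1j h3 ht).
- move=> [hi1 him hj2 hjn [h1 h2 h3 ht]].
  have hg : inGrid m n i j by rewrite /inGrid; lia.
  have hg2 : inGrid m n i.+1 j.-1 by rewrite /inGrid; lia.
  have [hj3' _ _ _] := pred_lem hES hg2 h2.
  have hj3 : 3 <= j by lia.
  have hi2 : 2 <= i.
    case/or3P: (alt_lem hES hg h1) => [/and3P [_ _] | /and4P [_ _ _] | /and4P [] //].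
      by rewrite h3.
    by rewrite h2.
  have hg1 : inGrid m n i.+1 j.+1 by rewrite /inGrid; lia.
  have [_ _ _ [hi1j _ _]] := pred_lem hES hg1 h3.
  exact: (@sweep_main m n C i j k false hES hi2 him hj3 hjn IH h2 h1 hi1j h3 ht).
Qed.

Lemma blocked_ext m n (D D' : config) a b : (forall x y, D x y = D' x y) ->
  blocked m n D a b <-> blocked m n D' a b.
Proof. by move=> E; rewrite /blocked !E. Qed.

Lemma blocked_mirror m n (D : config) a b : 1 <= b <= n ->
  blocked m n (mirror n D) a b <-> blocked m n D a (n.+1 - b).
Proof.
move=> hb; rewrite /blocked /mirror; split.
  move=> [h0 h2 h3 h4 [h5 h6 h7]].
  have e1 : n.+1 - b.-1 = (n.+1 - b).+1 by lia.
  have e2 : n.+1 - b.+1 = (n.+1 - b).-1 by lia.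
  rewrite e1 in h5; rewrite e2 in h6.
  by split => //; lia.
move=> [h0 h2 h3 h4 [h5 h6 h7]].
have e1 : n.+1 - b.-1 = (n.+1 - b).+1 by lia.
have e2 : n.+1 - b.+1 = (n.+1 - b).-1 by lia.
by rewrite e1 e2; split => //; lia.
Qed.

Lemma addHouse_mirror n C a b x y : 1 <= b <= n ->
  addHouse (mirror n C) a b x y = mirror n (addHouse C a (n.+1 - b)) x y.
Proof.
move=> hb; rewrite /addHouse /mirror.
have -> : (n.+1 - y == n.+1 - b) = (y == b) by apply/eqP/eqP; lia.
by [].
Qed.

Lemma ES_mirror m n C : ES m n C -> ES m n (mirror n C).
Proof.
move=> hES; have [[hp hmax] hpr halt] := hES.
have hperm : permissible m n (mirror n C).
  move=> a b hg h0 /(@blocked_mirror m n C a b (proj2 hg)) hb.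
  have hg' : inGrid m n a (n.+1 - b) by move: hg; rewrite /inGrid; lia.
  exact: (hp a (n.+1 - b) hg' h0 hb).
have hpred : resistant_predators m n (mirror n C).
  move=> a b hg h0.
  have hg' : inGrid m n a (n.+1 - b) by move: hg; rewrite /inGrid; lia.
  have := hpr a (n.+1 - b) hg' h0.
  move=> hb.
  apply/(@blocked_ext m n _ _ a b (fun x y => @addHouse_mirror n C a b x y (proj2 hg))).
  by apply/(@blocked_mirror m n (addHouse C a (n.+1 - b)) a b (proj2 hg)).
split => //.
- split => // a b hg h0 hp'.
  apply: (hp' a b hg); first by rewrite /addHouse !eqxx.
  exact: hpred.
- move=> a b hg h0.
  have hg' : inGrid m n a (n.+1 - b) by move: hg; rewrite /inGrid; lia.
  case: (halt a (n.+1 - b) hg' h0) => i' [j' [hgi hne hc hb]].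
  have hj' : 1 <= j' <= n by move: hgi; rewrite /inGrid; lia.
  exists i', (n.+1 - j'); split.
  + by move: hgi; rewrite /inGrid; lia.
  + move=> [e1 e2]; apply: hne; subst i'; congr pair; move: hg; rewrite /inGrid; lia.
  + by rewrite /mirror; have -> : n.+1 - (n.+1 - j') = j' by lia.
  + apply/(@blocked_ext m n _ _ i' (n.+1 - j') (fun x y => @addHouse_mirror n C a b x y (proj2 hg))).
    apply/(@blocked_mirror m n (addHouse C a (n.+1 - b)) i' (n.+1 - j')); first lia.
    by have -> : n.+1 - (n.+1 - j') = j' by lia.
Qed.

Unset Implicit Arguments.

Theorem mainTheorem9 (m n : nat) (C : config) :
  ES m n C ->
  forall k i j : nat,
    [/\ ~ typeI m n C k i j, ~ typeII m n C k i j,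
        ~ typeI m n (mirror n C) k i j & ~ typeII m n (mirror n C) k i j].
Proof.
move=> hES k i j.
have [h1 h2] := @no_patterns m n C hES i k j.
have [h3 h4] := @no_patterns m n (mirror n C) (@ES_mirror m n C hES) i k j.
by split.
Qed.
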